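(* Let $u$ be a positive solution of $\frac{u''}{1+(u')^2}=\frac{xu'}{2}-\frac u2+\frac{n-1}{u}$ on a finite interval $(x_1,x_2)$. If $u'<0$ and $u''>0$ on $(x_1,x_2)$, then $\lim_{x\to x_2}u(x)>0$.
   Context: $n\ge 2$ is a fixed integer. *)

(* Defs.v *)
From Stdlib Require Import Reals.
From Coquelicot Require Import Coquelicot.

(* Main.v *)
Require Import Defs.
From Stdlib Require Import Reals Lra Psatz Classical.
From Coquelicot Require Import Coquelicot.
Open Scope R_scope.

Lemma mvt_open (f df : R -> R) p q a b : p < a -> a < b -> b < q ->
  (forall x, p < x < q -> is_derive f x (df x)) ->
  exists c, a <= c <= b /\ f b - f a = df c * (b - a).
Proof.
  intros Hpa Hab Hbq Hd.
  destruct (MVT_gen f a b df) as [c [Hc He]].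
  - intros x Hx. apply Hd. rewrite Rmin_left, Rmax_right in Hx; lra.
  - intros x Hx. rewrite Rmin_left, Rmax_right in Hx by lra.
    apply continuity_pt_filterlim. apply (@ex_derive_continuous R_AbsRing R_NormedModule).
    exists (df x). apply Hd. lra.
  - exists c. rewrite Rmin_left, Rmax_right in Hc by lra. split; auto.
Qed.

Lemma ddir: forall x2 x : R, x < x2 -> is_derive (fun y => ln (x2 - y)) x (- / (x2 - x)).
Proof. intros. auto_derive. lra. field. lra. Qed.
Lemma hder (u1 u2 : R -> R) x2 M C x : M <> 0 -> x < x2 -> is_derive u1 x (u2 x) ->
  is_derive (fun y => u1 y + ln (x2 - y) / M + C * y) x (u2 x - / (M * (x2 - x)) + C).
Proof.
  intros HM Hx Hd. auto_derive.
  - split. eexists; eauto. lra.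
  - change (Derive (fun y => u1 y) x) with (Derive u1 x). rewrite (is_derive_unique _ _ _ Hd). field. split; lra.
Qed.

Theorem lemma2p4 (n : nat) (hn : (2 <= n)%nat)
  (x1 x2 : R) (hx : x1 < x2)
  (u u1 u2 : R -> R)
  (hd1 : forall x, x1 < x < x2 -> is_derive u x (u1 x))
  (hd2 : forall x, x1 < x < x2 -> is_derive u1 x (u2 x))
  (hpos : forall x, x1 < x < x2 -> 0 < u x)
  (hode : forall x, x1 < x < x2 ->
     u2 x / (1 + (u1 x) ^ 2) = x * u1 x / 2 - u x / 2 + (INR n - 1) / u x)
  (hdec : forall x, x1 < x < x2 -> u1 x < 0)
  (hconv : forall x, x1 < x < x2 -> 0 < u2 x) :
  exists L : R, 0 < L /\ filterlim u (at_left x2) (locally L).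
Proof.
  set (x0 := (x1 + x2) / 2).
  assert (Hx0 : x1 < x0 < x2) by (unfold x0; lra).
  assert (Hinc : forall a b, x1 < a -> a < b -> b < x2 -> u1 a < u1 b).
  { intros a b Ha Hab Hb. destruct (mvt_open u1 u2 x1 x2 a b) as [c [Hc He]]; auto.
    pose proof (hconv c ltac:(lra)). nra. }
  assert (Hdecu : forall a b, x1 < a -> a < b -> b < x2 -> u b < u a).
  { intros a b Ha Hab Hb. destruct (mvt_open u u1 x1 x2 a b) as [c [Hc He]]; auto.
    pose proof (hdec c ltac:(lra)). nra. }
  set (M := - u1 x0).
  assert (HM0 : 0 < M) by (unfold M; pose proof (hdec x0 Hx0); lra).
  assert (HM : forall x, x0 <= x < x2 -> - M <= u1 x).
  { intros x Hx. unfold M. destruct (Req_dec x x0) as [->|Hne]; [lra|].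
    pose proof (Hinc x0 x ltac:(lra) ltac:(lra) ltac:(lra)). lra. }
  assert (Hlip : forall a b, x0 <= a -> a < b -> b < x2 -> u a - u b <= M * (b - a)).
  { intros a b Ha Hab Hb. destruct (mvt_open u u1 x1 x2 a b) as [c [Hc He]]; try lra; auto.
    pose proof (HM c ltac:(lra)). nra. }
  assert (Hlow : exists m, 0 < m /\ forall x, x0 < x < x2 -> m <= u x).
  { apply NNPP; intro Hn.
    assert (Hsmall : forall m, 0 < m -> exists x, x0 < x < x2 /\ u x < m).
    { intros m Hm. apply NNPP; intro H. apply Hn. exists m; split; auto.
      intros x Hx. apply Rnot_lt_le. intro. apply H. exists x; auto. }
    assert (Hub : forall x, x0 <= x < x2 -> u x <= M * (x2 - x)).
    { intros x Hx. apply Rnot_lt_le; intro Hgt.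
      assert (HMp : 0 < M * (x2 - x)) by nra.
      destruct (Hsmall (u x - M * (x2 - x))) as [y [Hy Hye]]; [lra|].
      destruct (Rle_lt_dec y x).
      - destruct (Req_dec y x) as [->|Hne]; [lra|].
        pose proof (Hdecu y x ltac:(lra) ltac:(lra) ltac:(lra)). lra.
      - pose proof (Hlip x y ltac:(lra) ltac:(lra) ltac:(lra)). nra. }
    set (C := (Rabs x2 * M + u x0) / 2).
    assert (Hn2 : 2 <= INR n) by (apply (le_INR 2 n) in hn; simpl in hn; lra).
    assert (Hu2 : forall x, x0 <= x < x2 -> u2 x >= / (M * (x2 - x)) - C).
    { intros x Hx.
      assert (Hx' : x1 < x < x2) by lra.
      pose proof (hode x Hx') as Ho. pose proof (hconv x Hx') as Hc.
      pose proof (hpos x Hx') as Hp. pose proof (hdec x Hx') as Hd.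
      pose proof (HM x Hx) as Hm. pose proof (Hub x Hx) as Hb.
      assert (Hux0 : u x <= u x0).
      { destruct (Req_dec x x0) as [->|Hne]; [lra|].
        pose proof (Hdecu x0 x ltac:(lra) ltac:(lra) ltac:(lra)). lra. }
      assert (Hxu : x * u1 x >= - (Rabs x2 * M)).
      { pose proof (Rle_abs x2). destruct (Rle_dec 0 x).
        - assert (0 <= x * (u1 x + M)) by (apply Rmult_le_pos; lra).
          assert (0 <= (x2 - x) * M) by (apply Rmult_le_pos; lra).
          assert (0 <= (Rabs x2 - x2) * M) by (apply Rmult_le_pos; lra).
          nra.
        - assert (0 < (- x) * (- u1 x)) by (apply Rmult_lt_0_compat; lra).
          assert (0 <= Rabs x2 * M) by (apply Rmult_le_pos; [apply Rabs_pos|lra]).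
          nra. }
      set (RHS := x * u1 x / 2 - u x / 2 + (INR n - 1) / u x) in *.
      assert (Heq : u2 x = RHS * (1 + u1 x ^ 2)).
      { rewrite <- Ho. field. nra. }
      assert (HR : 0 < RHS) by nra.
      assert (Hge : u2 x >= RHS) by nra.
      assert (Hi : (INR n - 1) / u x >= / u x).
      { unfold Rdiv. assert (0 < / u x) by (apply Rinv_0_lt_compat; lra). nra. }
      assert (Hi2 : / (M * (x2 - x)) <= / u x).
      { apply Rinv_le_contravar; lra. }
      unfold RHS in *. unfold C. lra. }
    set (h := fun y => u1 y + ln (x2 - y) / M + C * y).
    assert (Hh : forall b, x0 < b -> b < x2 -> h x0 <= h b).
    { intros b Hab Hb.
      destruct (mvt_open h (fun y => u2 y - / (M * (x2 - y)) + C) x1 x2 x0 b) as [c [Hc He]];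
        try lra.
      - intros y Hy. unfold h. apply hder; try lra. apply hd2; lra.
      - pose proof (Hu2 c ltac:(lra)). nra. }
    set (A := M * (h x0 - C * x2)).
    set (d := Rmin ((x2 - x0) / 2) (exp A / 2)).
    assert (Hexp : 0 < exp A) by apply exp_pos.
    assert (Hd0 : 0 < d) by (unfold d; apply Rmin_glb_lt; lra).
    assert (Hd1 : d <= (x2 - x0) / 2) by apply Rmin_l.
    assert (Hd2 : d <= exp A / 2) by apply Rmin_r.
    assert (Hln : ln d < A).
    { rewrite <- (ln_exp A). apply ln_increasing; lra. }
    pose proof (Hh (x2 - d) ltac:(lra) ltac:(lra)) as Hhb.
    assert (Hhd : h (x2 - d) = u1 (x2 - d) + ln d / M + C * (x2 - d)).
    { unfold h. replace (x2 - (x2 - d)) with d by ring. reflexivity. }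
    pose proof (hdec (x2 - d) ltac:(lra)).
    assert (HC : 0 <= C).
    { unfold C. pose proof (Rabs_pos x2). pose proof (hpos x0 Hx0). nra. }
    assert (ln d / M < A / M) by (apply Rmult_lt_compat_r; [apply Rinv_0_lt_compat|]; lra).
    assert (A / M = h x0 - C * x2) by (unfold A; field; lra).
    assert (0 <= C * d) by (apply Rmult_le_pos; lra).
    lra. }
  destruct Hlow as [m [Hm Hml]].
  set (E := fun y => exists t, x0 < t < x2 /\ y = - u t).
  destruct (completeness E) as [S [HSu HSl]].
  { exists (- m). intros y [t [Ht ->]]. pose proof (Hml t Ht). lra. }
  { exists (- u ((x0 + x2) / 2)). exists ((x0 + x2) / 2). split; [lra|auto]. }
  assert (HS : S <= - m).
  { apply HSl. intros y [t [Ht ->]]. pose proof (Hml t Ht). lra. }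
  exists (- S). split; [lra|].
  apply filterlim_locally. intros eps.
  assert (Hex : exists t, x0 < t < x2 /\ u t < - S + eps).
  { apply NNPP; intro H.
    assert (S <= S - eps).
    { apply HSl. intros y [t [Ht ->]]. apply Rnot_lt_le. intro. apply H. exists t. split; auto. lra. }
    pose proof (cond_pos eps). lra. }
  destruct Hex as [t [Ht Hut]].
  assert (Hdl : 0 < x2 - t) by lra.
  exists (mkposreal _ Hdl). intros x Hx Hlt.
  unfold ball in Hx; simpl in Hx. unfold AbsRing_ball, abs, minus, plus, opp in Hx; simpl in Hx.
  apply Rabs_def2 in Hx.
  unfold ball; simpl. unfold AbsRing_ball, abs, minus, plus, opp; simpl.
  assert (Hxr : t < x < x2) by lra.
  pose proof (Hdecu t x ltac:(lra) ltac:(lra) ltac:(lra)).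
  assert (- u x <= S) by (apply HSu; exists x; split; [lra|auto]).
  apply Rabs_def1; lra.
Qed.
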